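(* Let $m\ge 2$ and let $K\neq\Delta_{[m]}$ be a simplicial complex on $[m]$. Then $$\max\bigl(m-1,\ \chi(K),\ \chi(K^\vee)\bigr)\le \chi(\mathrm{Bier}(K))\le m.$$
   Context: A simplicial complex $K$ on $[m]=\{1,\dots,m\}$ is a nonempty family of subsets of $[m]$ closed under taking subsets. $V(K)=\{i:\{i\}\in K\}$ is its set of (geometric) vertices; elements $i\in[m]$ with $\{i\}\notin K$ are ghost vertices. $\Delta_{[m]}=2^{[m]}$. Let $[m']=\{1',\dots,m'\}$ be a disjoint copy of $[m]$ and for $I\subseteq[m]$ let $I'=\{i':i\in I\}$. For $K\ne\Delta_{[m]}$ the Alexander dual $K^\vee$ is the simplicial complex on $[m']$ with $J'\in K^\vee$ iff $[m]\setminus J\notin K$. The Bier sphere $\mathrm{Bier}(K)$ is the simplicial complex on $[m]\sqcup[m']$ whose faces are $I\sqcup J'$ with $I\in K$, $J'\in K^\vee$, $I\cap J=\varnothing$; it is a PL sphere of dimension $m-2$. The chromatic number $\chi(L)$ of a simplicial complex $L$ is the least number of colors in a map $c\colon V(L)\to C$ with $c(u)\ne c(v)$ whenever $\{u,v\}\in L$ (i.e. the chromatic number of the 1-skeleton). *)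

(* Defs.v *)
From mathcomp Require Import all_boot.
Set Implicit Arguments. Unset Strict Implicit. Unset Printing Implicit Defensive.

(* A simplicial complex on the finite ground set T (ghost vertices allowed):
   a nonempty family of subsets closed under taking subsets. *)
Definition is_complex (T : finType) (K : {set {set T}}) : Prop :=
  K != set0 /\ forall A B : {set T}, A \in K -> B \subset A -> B \in K.

(* Alexander dual, realized on a copy of the same index type:
   J' \in K^vee  iff  [m] \ J \notin K. *)
Definition alex_dual (m : nat) (K : {set {set 'I_m}}) : {set {set 'I_m}} :=
  [set J : {set 'I_m} | ~: J \notin K].

(* Bier sphere on [m] ⊔ [m'] = 'I_m + 'I_m (inl = unprimed, inr = primed). *)
Definition bier (m : nat) (K : {set {set 'I_m}}) : {set {set ('I_m + 'I_m)}} :=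
  [set S : {set ('I_m + 'I_m)} |
     [&& [set i | inl i \in S] \in K,
         [set j | inr j \in S] \in alex_dual K &
         [disjoint [set i | inl i \in S] & [set j | inr j \in S]]]].

(* k-colorability of (the 1-skeleton of) L: a map from the geometric vertices
   to k colors (ghost vertices are sent to None), distinct on edges. *)
Definition colorable (T : finType) (L : {set {set T}}) (k : nat) : bool :=
  [exists c : {ffun T -> option 'I_k},
     [forall v, ([set v] \in L) ==> (c v != None)] &&
     [forall u, forall v, ((u != v) && ([set u; v] \in L)) ==> (c u != c v)]].

Lemma colorable_card (T : finType) (L : {set {set T}}) :
  exists k, colorable L k.
Proof.
exists #|T|; apply/existsP; exists [ffun v => Some (enum_rank v)].
apply/andP; split; apply/forallP => u.
  by apply/implyP; rewrite ffunE.
apply/forallP => v; apply/implyP => /andP [uv _].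
by rewrite !ffunE; apply: contra uv => /eqP [] /enum_rank_inj ->.
Qed.

Definition chi (T : finType) (L : {set {set T}}) : nat :=
  ex_minn (colorable_card L).

(* Main.v *)
Require Import Defs.
From mathcomp Require Import all_boot.
Set Implicit Arguments. Unset Strict Implicit. Unset Printing Implicit Defensive.

Lemma chi_le (T : finType) (L : {set {set T}}) k : colorable L k -> chi L <= k.
Proof. rewrite /chi; case: ex_minnP => n _ H; exact: H. Qed.

Lemma chi_ge (T : finType) (L : {set {set T}}) n :
  (forall k, colorable L k -> n <= k) -> n <= chi L.
Proof. rewrite /chi; case: ex_minnP => k Hk _ H; exact: H. Qed.

Lemma colorable_transfer (T T' : finType) (L : {set {set T}}) (L' : {set {set T'}})
  (h : T -> T') k : injective h ->
  (forall v, [set v] \in L -> [set h v] \in L') ->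
  (forall u v, u != v -> [set u; v] \in L -> [set h u; h v] \in L') ->
  colorable L' k -> colorable L k.
Proof.
move=> hi H1 H2 /existsP [c /andP [/forallP c1 /forallP c2]].
apply/existsP; exists [ffun v => c (h v)]; apply/andP; split.
  apply/forallP => v; apply/implyP => Hv; rewrite ffunE.
  by move/implyP: (c1 (h v)); apply; apply: H1.
apply/forallP => u; apply/forallP => v; apply/implyP => /andP [uv Huv].
rewrite !ffunE; move/forallP: (c2 (h u)) => /(_ (h v)) /implyP; apply.
by rewrite (inj_eq hi) uv /=; apply: H2.
Qed.

Section S.
Variables (m : nat) (K : {set {set 'I_m}}).
Hypothesis (HK : is_complex K) (HF : K != [set: {set 'I_m}]).

Lemma set0K : set0 \in K.
Proof.
case: HK => /set0Pn [A HA] Hc; exact: Hc HA (sub0set A).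
Qed.

Lemma setTK : setT \notin K.
Proof.
apply: contra HF => HT; apply/eqP/setP => A; rewrite inE.
case: HK => _ Hc; exact: Hc HT (subsetT A).
Qed.

Lemma bier_sub (S : {set 'I_m + 'I_m}) I J :
  I \in K -> J \in alex_dual K -> [disjoint I & J] ->
  [set i | inl i \in S] \subset I -> [set j | inr j \in S] \subset J ->
  S \in bier K.
Proof.
move=> HI HJ dIJ sI sJ; rewrite inE; apply/and3P; split.
- case: HK => _ Hc; exact: Hc HI sI.
- move: HJ; rewrite !inE; apply: contra => H.
  case: HK => _ Hc; apply: Hc H _; by rewrite setCS.
- by apply: disjointWl sI _; apply: disjointWr sJ _.
Qed.

Lemma upper : colorable (bier K) m.
Proof.
apply/existsP; exists [ffun v => Some (match v with inl i => i | inr i => i end)].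
apply/andP; split; apply/forallP => u.
  by apply/implyP; rewrite ffunE.
apply/forallP => v; apply/implyP => /andP [uv Huv]; rewrite !ffunE.
move: Huv; rewrite inE => /and3P [_ _ D].
case: u v uv D => [a|a] [b|b] uv D //=; apply: contra uv => /eqP [Eab];
  subst b => //.
- move/disjointFr: D => /(_ a); rewrite !inE !eqxx /= ?orbT => /(_ isT).
  by [].
- move/disjointFr: D => /(_ a); rewrite !inE !eqxx /= ?orbT => /(_ isT).
  by [].
Qed.

Lemma inl_eq (a b : 'I_m) : (inl a == inl b :> 'I_m + 'I_m) = (a == b).
Proof. by apply/eqP/eqP => [[]|->]. Qed.
Lemma inr_eq (a b : 'I_m) : (inr a == inr b :> 'I_m + 'I_m) = (a == b).
Proof. by apply/eqP/eqP => [[]|->]. Qed.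
Lemma inlr_eq (a b : 'I_m) : (inl a == inr b :> 'I_m + 'I_m) = false.
Proof. by []. Qed.
Lemma inrl_eq (a b : 'I_m) : (inr a == inl b :> 'I_m + 'I_m) = false.
Proof. by []. Qed.

Lemma dis0r (A : {set 'I_m}) : [disjoint A & set0].
Proof. by rewrite disjoints_subset setC0 subsetT. Qed.
Lemma dis0l (A : {set 'I_m}) : [disjoint set0 & A].
Proof. by rewrite disjoint_sym dis0r. Qed.

Lemma set0D : set0 \in alex_dual K.
Proof. by rewrite inE setC0 setTK. Qed.

Lemma lowerK k : colorable (bier K) k -> colorable K k.
Proof.
apply: (colorable_transfer (h := inl)).
- by move=> a b [].
- move=> v Hv; apply: (bier_sub Hv set0D (dis0r _)) => //.
  + by apply/subsetP => x; rewrite !inE inl_eq.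
  + by apply/subsetP => x; rewrite !inE.
- move=> u v _ Hv; apply: (bier_sub Hv set0D (dis0r _)) => //.
  + by apply/subsetP => x; rewrite !inE !inl_eq.
  + by apply/subsetP => x; rewrite !inE.
Qed.

Lemma lowerD k : colorable (bier K) k -> colorable (alex_dual K) k.
Proof.
apply: (colorable_transfer (h := inr)).
- by move=> a b [].
- move=> v Hv; apply: (bier_sub set0K Hv) => //.
  + exact: dis0l.
  + by apply/subsetP => x; rewrite !inE.
  + by apply/subsetP => x; rewrite !inE inr_eq.
- move=> u v _ Hv; apply: (bier_sub set0K Hv) => //.
  + exact: dis0l.
  + by apply/subsetP => x; rewrite !inE.
  + by apply/subsetP => x; rewrite !inE !inr_eq.
Qed.

Lemma clique k : colorable (bier K) k -> m.-1 <= k.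
Proof.
have [I KI maxI] : exists2 I, I \in K & forall J, J \in K -> #|J| <= #|I|.
  by case: (@arg_maxnP _ set0 (mem K) (fun I => #|I|) set0K) => I; exists I.
have [i Ni] : exists i, i \notin I.
  case: (pickP [pred x | x \notin I]) => [i Hi | H]; first by exists i.
  exfalso; apply: (negP setTK); suff ->: setT = I by [].
  by apply/setP => x; rewrite inE; move: (H x) => /= /negbFE ->.
have Ii : i |: I \notin K.
  by apply/negP => H; move: (maxI _ H); rewrite cardsU1 Ni add1n ltnn.
have HJ : ~: (i |: I) \in alex_dual K by rewrite inE setCK.
pose f x : 'I_m + 'I_m := if x \in I then inl x else inr x.
have finj : injective f.
  move=> x y; rewrite /f; case: (x \in I); case: (y \in I) => //; by case.
have HS : forall S : {set _ + _}, S \subset f @: [set~ i] -> S \in bier K.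
  move=> S HS; apply: (bier_sub KI HJ).
  - by rewrite disjoints_subset setCK subsetUr.
  - apply/subsetP => a; rewrite inE => /(subsetP HS) /imsetP [x].
    rewrite inE /f => xi; case: ifP => xI // [->] //.
  - apply/subsetP => a; rewrite inE => /(subsetP HS) /imsetP [x].
    rewrite inE /f => xi; case: ifP => xI // [->].
    by move: xi; rewrite !inE xI orbF.
move=> /existsP [c /andP [/forallP c1 /forallP c2]].
pose g x := c (f x).
have gin : {in [set~ i] &, injective g}.
  move=> x y Hx Hy E; apply/eqP; move: E; apply: contra_eqT => xy.
  move/forallP: (c2 (f x)) => /(_ (f y)) /implyP; apply.
  rewrite (inj_eq finj) xy /=; apply: HS.
  by apply/subsetP => z; rewrite !inE => /orP [] /eqP ->; apply: imset_f.
have := card_in_imset gin; rewrite cardsC1 card_ord => <-.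
apply: (@leq_trans #|[set~ (None : option 'I_k)]|); last by rewrite cardsC1 card_option card_ord.
apply: subset_leq_card; apply/subsetP => z /imsetP [x Hx ->].
rewrite !inE; move/implyP: (c1 (f x)); apply; apply: HS.
by apply/subsetP => w; rewrite !inE => /eqP ->; apply: imset_f.
Qed.
End S.

Theorem mainTheorem1 (m : nat) (K : {set {set 'I_m}}) :
  2 <= m -> is_complex K -> K != [set: {set 'I_m}] ->
  maxn (m - 1) (maxn (chi K) (chi (alex_dual K))) <= chi (bier K) <= m.
Proof.
move=> _ HK HF; rewrite (chi_le (upper K)) andbT.
rewrite !geq_max subn1; apply/and3P; split; apply: chi_ge => k Hk.
- exact: (clique HK HF Hk).
- by apply: chi_le; apply: (lowerK HK HF Hk).
- by apply: chi_le; apply: (lowerD HK Hk).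
Qed.
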